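(* Let $N,n,m,p,l$ be positive integers, $A\in\mathbb{R}^{n\times n}$, $B\in\mathbb{R}^{n\times p}$, $C\in\mathbb{R}^{m\times n}$, $H\in\mathbb{R}^{n\times m}$, $W=[w_{ij}]\in\mathbb{R}^{N\times N}$ with $w_{ii}=0$ for all $i$, $\Delta=\mathrm{diag}(\delta_1,\dots,\delta_N)$ with $\delta_i\in\{0,1\}$, and $h>0$. Put $\mathcal{B}(h)=\int_0^h e^{A\tau}d\tau\,B$, $\mathcal{H}(h)=\int_0^h e^{A\tau}d\tau\,HC$, $\Phi_s=I_N\otimes e^{Ah}+W\otimes\mathcal{H}(h)$, $\Psi_s=\Delta\otimes\mathcal{B}(h)$, $\tilde\Phi_s=\Phi_s^l$ and $\tilde\Psi_s=(\Phi_s^{l-1}+\Phi_s^{l-2}+\dots+\Phi_s+I)\Psi_s$. Suppose: (1) for every eigenvalue $\theta$ of $\Phi_s$, $\sum_{c=0}^{l-1}\theta^c\neq0$; (2) for every eigenvalue $\theta$ of $\Phi_s$ and every nonzero row vector $\eta\in\mathbb{C}^{1\times Nn}$ with $\eta\tilde\Phi_s=\theta^l\eta$, one has $\eta(\Delta\otimes\mathcal{B}(h))\neq0$. Then the discrete-time system $X(k+1)=\tilde\Phi_sX(k)+\tilde\Psi_sU(k)$ is controllable.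
   Context: This is the networked transmission multi-rate sampled-data system: transmission sampling period $h$, control sampling period $lh$, written as a discrete-time system with period $lh$. The discrete-time system is called controllable if every initial state can be steered to the origin in finitely many steps. $\otimes$ is the Kronecker product. *)

(* Defs.v *)
From HB Require Import structures.
From mathcomp Require Import all_boot all_order all_algebra.
From mathcomp Require Import all_classical all_reals all_analysis.
From mathcomp Require Import mxtens complex.
Set Implicit Arguments.
Unset Strict Implicit.
Unset Printing Implicit Defensive.
Import Order.TTheory GRing.Theory Num.Theory.
Import numFieldNormedType.Exports.
Local Open Scope ring_scope.
Local Open Scope classical_set_scope.

Notation kron := tensmx.

Definition expmx (R : realType) (n : nat) (A : 'M[R]_n) (t : R) : 'M[R]_n :=
  \matrix_(i, j) limn (fun K : nat =>
      (\sum_(k < K) ((t ^+ k / (k`!)%:R) *: (A ^+ k))) i j).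

Definition intexpmx (R : realType) (n : nat) (A : 'M[R]_n) (h : R) : 'M[R]_n :=
  \matrix_(i, j) (\int[lebesgue_measure]_(tau in `[0, h]) (expmx A tau i j)).

Fixpoint traj (R : pzRingType) (q r : nat) (F : 'M[R]_q) (G : 'M[R]_(q, r))
  (x0 : 'cV[R]_q) (U : nat -> 'cV[R]_r) (k : nat) : 'cV[R]_q :=
  match k with
  | 0 => x0
  | k'.+1 => F *m traj F G x0 U k' + G *m U k'
  end.

Definition controllable (R : pzRingType) (q r : nat) (F : 'M[R]_q) (G : 'M[R]_(q, r)) :=
  forall x0 : 'cV[R]_q, exists (K : nat) (U : nat -> 'cV[R]_r), traj F G x0 U K = 0.

Definition cmx (R : rcfType) (a b : nat) (M : 'M[R]_(a, b)) : 'M[R[i]]_(a, b) :=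
  map_mx (fun x : R => (x%:C)%C) M.

(* Main.v *)
Require Import Defs.
From HB Require Import structures.
From mathcomp Require Import all_boot all_order all_algebra.
From mathcomp Require Import all_classical all_reals all_analysis.
From mathcomp Require Import mxtens complex.
Import Order.TTheory GRing.Theory Num.Theory.
Import numFieldNormedType.Exports.
Local Open Scope ring_scope.

Lemma traj_formula (R : pzRingType) q r (F : 'M[R]_q) (G : 'M[R]_(q, r)) x0 U K :
  traj F G x0 U K = F ^+ K *m x0 + \sum_(j < K) (F ^+ (K - j.+1) *m G *m U j).
Proof.
elim: K => [|K IH] /=; first by rewrite expr0 mul1mx big_ord0 addr0.
have eS : forall k, F *m F ^+ k = F ^+ k.+1 by move=> k; rewrite exprS.
rewrite IH big_ord_recr /= subnn expr0 mul1mx mulmxDr mulmxA eS.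
rewrite mulmx_sumr -addrA; congr (_ + (_ + _)).
apply: eq_bigr => j _; rewrite !mulmxA eS; congr (_ ^+ _ *m _ *m _).
by rewrite subSS -subSn // ltn_ord.
Qed.

Lemma horner_mx_sum (K : fieldType) q' (A : 'M[K]_q'.+1) (p : {poly K}) :
  horner_mx A p = \sum_(i < size p) p`_i *: A ^+ i.
Proof.
rewrite -{1}(coefK p) poly_def linear_sum; apply: eq_bigr => i _.
by rewrite linearZ /= rmorphXn /= horner_mx_X.
Qed.

Lemma CH_ext (K : fieldType) q' (F : 'M[K]_q'.+1) r (G : 'M[K]_(q'.+1, r)) (v : 'rV_q'.+1) :
  (forall k, (k < q'.+1)%N -> v *m (F ^+ k *m G) = 0) ->
  forall k, v *m (F ^+ k *m G) = 0.
Proof.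
move=> H k.
have hF : F ^+ k = horner_mx F ('X^k %% char_poly F).
  transitivity (horner_mx F 'X^k); first by rewrite rmorphXn /= horner_mx_X.
  by rewrite {1}(divp_eq 'X^k (char_poly F)) rmorphD rmorphM /= Cayley_Hamilton mulr0 add0r.
have hs : (size ('X^k %% char_poly F)%R <= q'.+1)%N.
  have := @ltn_modpN0 _ 'X^k (char_poly F); rewrite size_char_poly ltnS.
  by apply; rewrite monic_neq0 ?char_poly_monic.
rewrite hF horner_mx_sum mulmx_suml mulmx_sumr big1 // => i _.
rewrite -scalemxAl -scalemxAr H ?scaler0 //.
exact: leq_trans (ltn_ord i) hs.
Qed.

Lemma descent (K : fieldType) q' (F : 'M[K]_q'.+1) (P : 'rV_q'.+1 -> Prop) rs
  (xi : 'rV_q'.+1) :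
  (forall xi z, P xi -> P (xi *m (F - z%:M))) -> P xi -> xi != 0 ->
  xi *m horner_mx F (\prod_(z <- rs) ('X - z%:P)) = 0 ->
  exists z, exists2 xi', z \in rs & [/\ P xi', xi' != 0 & xi' *m F = z *: xi'].
Proof.
move=> hP; elim: rs xi => [|z rs IH] xi Pxi nz.
  by rewrite big_nil rmorph1 mulmx1 => e; rewrite e eqxx in nz.
rewrite big_cons rmorphM /= rmorphB /= horner_mx_X horner_mx_C -mulmxE mulmxA.
have [e|ne] := eqVneq (xi *m (F - z%:M)) 0.
  move=> _; exists z; exists xi; first by rewrite mem_head.
  split=> //; apply/eqP; rewrite -subr_eq0 -mul_mx_scalar -mulmxBr; exact/eqP.
move=> e; have [w [xi' wi [P' nz' E']]] := IH _ (hP _ _ Pxi) ne e.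
by exists w; exists xi'; rewrite // inE wi orbT.
Qed.

Lemma spanning (K : fieldType) q r (F : 'M[K]_q) (G : 'M[K]_(q, r)) :
  (forall v : 'rV_q, (forall k, (k < q)%N -> v *m (F ^+ k *m G) = 0) -> v = 0) ->
  forall x : 'cV_q, exists u : 'I_q -> 'cV_r, x = \sum_(k < q) F ^+ k *m G *m u k.
Proof.
move=> hyp x.
pose M (k : nat) := (F ^+ k *m G)^T.
pose S := (\sum_(k < q) genmx (M k))%MS.
have MS (k : 'I_q) : (M k <= S)%MS by apply: (sumsmx_sup k) => //; rewrite genmxE.
have full : row_full S.
  apply: contraT => nf.
  have cnz : cokermx S != 0.
    rewrite -mxrank_eq0 mxrank_coker subn_eq0 leqNgt ltn_neqAle.
    by move: nf; rewrite /row_full => ->; rewrite rank_leq_col.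
  have [j hj] : exists j, col j (cokermx S) != 0.
    apply/existsP; apply: contraNT cnz; rewrite negb_exists => /forallP H0.
    apply/eqP/matrixP => a b; have := eqP (negbNE (H0 b)).
    by move/matrixP/(_ a 0); rewrite !mxE.
  set w := col j (cokermx S) in hj.
  have Sw : S *m w = 0 by rewrite /w colE mulmxA mulmx_coker mul0mx.
  have : w^T = 0.
    apply: hyp => k hk.
    rewrite -[F ^+ k *m G]trmxK -trmx_mul -[(F ^+ k *m G)^T]/(M k).
    rewrite -(mulmxKpV (MS (Ordinal hk))) /= -[_ *m S *m w]mulmxA Sw mulmx0; exact: trmx0.
  by move/(congr1 trmx); rewrite trmxK trmx0 => w0; rewrite w0 eqxx in hj.
have /sub_sumsmxP [u e] : (x^T <= S)%MS by exact: submx_full.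
exists (fun k => (u k *m genmx (M k) *m pinvmx (M k))^T).
rewrite -[x]trmxK e raddf_sum /=; apply: eq_bigr => k _.
have gk : (genmx (M k) <= M k)%MS by rewrite genmxE.
by rewrite -{1}(mulmxKpV gk) !mulmxA trmx_mul trmxK.
Qed.

Lemma cmxE (R : rcfType) a b (M : 'M[R]_(a, b)) : cmx M = map_mx (real_complex R) M.
Proof. by []. Qed.

Lemma cmxM (R : rcfType) a b c (M : 'M[R]_(a, b)) (M' : 'M[R]_(b, c)) :
  cmx (M *m M') = cmx M *m cmx M'.
Proof. by rewrite !cmxE map_mxM. Qed.

Lemma cmxX (R : rcfType) a (M : 'M[R]_a) k : cmx (M ^+ k) = cmx M ^+ k.
Proof.
elim: k => [|k IH]; first by rewrite !expr0 cmxE map_mx1.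
by rewrite !exprS -[M * _]/(M *m _) cmxM IH.
Qed.

Lemma pbh (R : rcfType) q r (F : 'M[R]_q) (G : 'M[R]_(q, r)) :
  (forall (mu : R[i]) (xi : 'rV[R[i]]_q), xi != 0 -> xi *m cmx F = mu *: xi ->
     xi *m cmx G != 0) ->
  controllable F G.
Proof.
case: q F G => [|q'] F G hyp x0.
  by exists 0%N, (fun _ => 0); rewrite /= flatmx0.
have sp := @spanning _ _ _ F G.
have {sp} sp : forall x, exists u : 'I_q'.+1 -> 'cV_r, x = \sum_(k < q'.+1) F ^+ k *m G *m u k.
  apply: sp => v hv; apply/eqP; apply: contraT => nz.
  have hall := @CH_ext _ _ F _ G v hv.
  pose P (xi : 'rV[R[i]]_q'.+1) := forall k, xi *m (cmx F ^+ k *m cmx G) = 0.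
  have Pv : P (cmx v).
    by move=> k; rewrite -cmxX -!cmxM hall cmxE map_mx0.
  have [rs ers] := closed_field_poly_normal (char_poly (cmx F)).
  rewrite (monicP (char_poly_monic _)) scale1r in ers.
  have hP : forall xi z, P xi -> P (xi *m (cmx F - z%:M)).
    move=> xi z Pxi k; rewrite mulmxBr mulmxBl mul_mx_scalar -scalemxAl Pxi scaler0 subr0.
    by rewrite -mulmxA (mulmxA (cmx F)) -[cmx F *m _]/(cmx F * _) -exprS Pxi.
  have nzv : cmx v != 0 by rewrite cmxE map_mx_eq0.
  have hh : cmx v *m horner_mx (cmx F) (\prod_(z <- rs) ('X - z%:P)) = 0.
    by rewrite -ers Cayley_Hamilton mulmx0.
  have [z [xi' _ [Pxi' nz' E']]] := @descent _ _ (cmx F) P rs (cmx v) hP Pv nzv hh.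
  by have := hyp z xi' nz' E'; have := Pxi' 0%N; rewrite expr0 mul1mx => ->; rewrite eqxx.
have [u e] := sp (- (F ^+ q'.+1 *m x0)).
exists q'.+1, (fun j => u (rev_ord (inord j))).
rewrite traj_formula (eq_bigr (fun j => F ^+ (rev_ord j) *m G *m u (rev_ord j))).
  by rewrite (reindex_inj rev_ord_inj) /= in e; rewrite -e subrr.
by move=> j _; rewrite inord_val.
Qed.

Lemma main_gen (R : rcfType) q r (Phi : 'M[R]_q) (Psi : 'M[R]_(q, r)) l :
  (0 < l)%N ->
  (forall theta : R[i], eigenvalue (cmx Phi) theta -> \sum_(c < l) theta ^+ c != 0) ->
  (forall theta : R[i], eigenvalue (cmx Phi) theta ->
     forall eta : 'rV[R[i]]_q, eta != 0 ->
       eta *m cmx (Phi ^+ l) = theta ^+ l *: eta -> eta *m cmx Psi != 0) ->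
  controllable (Phi ^+ l) ((\sum_(c < l) Phi ^+ c) *m Psi).
Proof.
move=> l0 h1 h2; apply: pbh => mu xi nz E.
case: q Phi Psi xi nz E h1 h2 => [|q'] Phi Psi xi nz E h1 h2.
  by rewrite thinmx0 eqxx in nz.
set P' := cmx Phi.
have eS : cmx (\sum_(c < l) Phi ^+ c) = \sum_(c < l) P' ^+ c.
  by rewrite cmxE map_mx_sum; apply: eq_bigr => c _; rewrite -cmxE cmxX.
pose s : {poly R[i]} := \sum_(c < l) 'X^c.
have hs : horner_mx P' s = \sum_(c < l) P' ^+ c.
  by rewrite rmorph_sum; apply: eq_bigr => c _; rewrite rmorphXn /= horner_mx_X.
have s0 : s != 0.
  have : s.[0] = 1.
    rewrite /s horner_sum -(prednK l0) big_ord_recl hornerXn expr0 big1 ?addr0 //.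
    by move=> c _; rewrite hornerXn expr0n.
  by move=> h; apply/eqP => e; move: h; rewrite e horner0 => /eqP; rewrite eq_sym oner_eq0.
rewrite cmxM eS mulmxA.
set xi' := xi *m _.
have nz' : xi' != 0.
  apply/eqP => e0.
  have [rs ers] := closed_field_poly_normal s.
  have lc0 : lead_coef s != 0 by rewrite lead_coef_eq0.
  have hh : xi *m horner_mx P' (\prod_(z <- rs) ('X - z%:P)) = 0.
    move: e0; rewrite /xi' -hs {1}ers linearZ /= -scalemxAr => /eqP.
    by rewrite scaler_eq0 (negbTE lc0) /= => /eqP.
  have [z [xi2 zr [_ nz2 E2]]] :=
    @descent _ _ P' (fun _ => True) rs xi (fun _ _ _ => I) I nz hh.
  have ev : eigenvalue P' z by apply/eigenvalueP; exists xi2.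
  have : root s z by rewrite ers rootZ // root_prod_XsubC.
  rewrite /root /s horner_sum; under eq_bigr do rewrite hornerXn.
  by move=> r0; have := h1 z ev; rewrite r0.
have E' : xi' *m P' ^+ l = mu *: xi'.
  have cm : GRing.comm (\sum_(c < l) P' ^+ c) (P' ^+ l).
    apply: commr_sym; apply: commr_sum => c _.
    apply: commrX; apply: commr_sym; apply: commrX; exact: commr_refl.
  rewrite /xi' -mulmxA -[_ *m P' ^+ l]/(_ * _) cm -[_ * _]/(_ *m _) mulmxA.
  by rewrite -/P' -cmxX E -scalemxAl.
have [rs ers] := closed_field_poly_normal ('X^l - mu%:P).
rewrite lead_coefXnsubC // scale1r in ers.
have hh : xi' *m horner_mx P' (\prod_(z <- rs) ('X - z%:P)) = 0.
  rewrite -ers rmorphB /= rmorphXn /= horner_mx_X horner_mx_C mulmxBr E'.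
  by rewrite mul_mx_scalar subrr.
have [z [xi2 zr [_ nz2 E2]]] :=
  @descent _ _ P' (fun _ => True) rs xi' (fun _ _ _ => I) I nz' hh.
have ev : eigenvalue P' z by apply/eigenvalueP; exists xi2.
have zl : z ^+ l = mu.
  have : root ('X^l - mu%:P) z by rewrite ers root_prod_XsubC.
  by rewrite /root hornerD hornerN hornerXn hornerC subr_eq0 => /eqP.
apply: (h2 z ev xi' nz').
by rewrite cmxX zl.
Qed.
Theorem corollary13 (R : realType) (N n m p l : nat)
  (A : 'M[R]_n) (B : 'M[R]_(n, p)) (C : 'M[R]_(m, n)) (H : 'M[R]_(n, m))
  (W : 'M[R]_N) (delta : 'I_N -> bool) (h : R) :
  (0 < N)%N -> (0 < n)%N -> (0 < m)%N -> (0 < p)%N -> (0 < l)%N ->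
  (forall i : 'I_N, W i i = 0) ->
  0 < h ->
  let Bh : 'M[R]_(n, p) := intexpmx A h *m B in
  let Hh : 'M[R]_n := intexpmx A h *m (H *m C) in
  let Delta : 'M[R]_N := diag_mx (\row_i (delta i)%:R) in
  let Phi : 'M[R]_(N * n) := kron (1%:M : 'M[R]_N) (expmx A h) + kron W Hh in
  let Psi : 'M[R]_(N * n, N * p) := kron Delta Bh in
  let Phit : 'M[R]_(N * n) := Phi ^+ l in
  let Psit : 'M[R]_(N * n, N * p) := (\sum_(c < l) Phi ^+ c) *m Psi in
  (forall theta : R[i], eigenvalue (cmx Phi) theta ->
     \sum_(c < l) theta ^+ c != 0) ->
  (forall theta : R[i], eigenvalue (cmx Phi) theta ->
     forall eta : 'rV[R[i]]_(N * n), eta != 0 ->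
       eta *m cmx Phit = theta ^+ l *: eta ->
       eta *m cmx (kron Delta Bh) != 0) ->
  controllable Phit Psit.
Proof.
move=> N0 n0 m0 p0 l0 Wii h0 Bh Hh Delta Phi Psi Phit Psit h1 h2.
exact: (@main_gen R _ _ Phi Psi l l0 h1 h2).
Qed.
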